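(* Let $\mathcal{L}_{\rm F}$ be the Fibonacci language and let ${\rm S}:\mathcal{L}_{\rm F}\to\mathbb{N}$ be a homomorphism. If ${\rm S}(0)=1$ and ${\rm S}(1)\le3$, or if ${\rm S}(0)=2$ and ${\rm S}(1)=1$, then ${\rm S}(\mathcal{L}_{\rm F})=\mathbb{N}$.
   Context: $\mathbb{N}=\{1,2,3,\dots\}$ and $[x]$ denotes the integer part (floor) of $x$. Let $\Phi=(1+\sqrt5)/2$ and $\alpha=2-\Phi$. The characteristic word $c_\alpha=(c_\alpha(n))_{n\ge0}$ is the infinite word over $\{0,1\}$ with $c_\alpha(n)=[(n+2)\alpha]-[(n+1)\alpha]$ (the infinite Fibonacci word). The Fibonacci language $\mathcal{L}_{\rm F}$ is the set of all nonempty finite words occurring as factors of $c_\alpha$. A homomorphism ${\rm S}:\mathcal{L}_{\rm F}\to\mathbb{N}$ is a map with ${\rm S}(w_1\cdots w_n)={\rm S}(w_1)+\cdots+{\rm S}(w_n)$, determined by ${\rm S}(0),{\rm S}(1)\in\mathbb{N}$. *)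

(* Defs.v *)
From Stdlib Require Import Reals ZArith List.
Import ListNotations.
Open Scope R_scope.

Definition Phi : R := (1 + sqrt 5) / 2.
Definition alpha : R := 2 - Phi.

Definition floorR (x : R) : Z := Int_part x.

Definition c_alpha (n : nat) : Z :=
  (floorR ((INR n + 2) * alpha) - floorR ((INR n + 1) * alpha))%Z.

(* Fibonacci language: nonempty finite words (over letters 0/1, encoded
   as integers) occurring as factors of c_alpha. *)
Definition in_LF (w : list Z) : Prop :=
  w <> [] /\ exists i : nat, forall k : nat, (k < length w)%nat ->
    nth k w 0%Z = c_alpha (i + k).

Definition S_letter (s0 s1 : nat) (a : Z) : nat :=
  if Z.eqb a 0 then s0 else s1.
Definition S_hom (s0 s1 : nat) (w : list Z) : nat :=
  fold_right (fun a acc => (S_letter s0 s1 a + acc)%nat) 0%nat w.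

(* Main.v *)
Require Import Defs.
From Stdlib Require Import Reals ZArith List Lra Lia Psatz.
Import ListNotations.
Open Scope R_scope.

Lemma floor_eq x z : IZR z <= x < IZR z + 1 -> floorR x = z.
Proof.
  intros [Ha Hb]. unfold floorR. destruct (base_Int_part x) as [H1 H2].
  assert (H3 : IZR (Int_part x) < IZR (z + 1)) by (rewrite plus_IZR; lra).
  assert (H4 : IZR z < IZR (Int_part x + 1)) by (rewrite plus_IZR; lra).
  apply lt_IZR in H3. apply lt_IZR in H4. lia.
Qed.

Lemma alpha_bounds : 1/3 < alpha < 2/5.
Proof.
  unfold alpha, Phi.
  assert (H5 : sqrt 5 * sqrt 5 = 5) by (apply sqrt_sqrt; lra).
  assert (H0 : 0 <= sqrt 5) by apply sqrt_pos.
  split; nra.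
Qed.

Lemma floor_le_bounds x : IZR (floorR x) <= x /\ x < IZR (floorR x) + 1.
Proof. unfold floorR. destruct (base_Int_part x). lra. Qed.

Lemma c0 : c_alpha 0 = 0%Z.
Proof.
  pose proof alpha_bounds. unfold c_alpha. simpl INR.
  rewrite (floor_eq _ 0), (floor_eq _ 0); try reflexivity; simpl IZR; lra.
Qed.
Lemma c1 : c_alpha 1 = 1%Z.
Proof.
  pose proof alpha_bounds. unfold c_alpha. simpl INR.
  rewrite (floor_eq _ 1), (floor_eq _ 0); try reflexivity; simpl IZR; lra.
Qed.
Lemma c2 : c_alpha 2 = 0%Z.
Proof.
  pose proof alpha_bounds. unfold c_alpha. simpl INR.
  rewrite (floor_eq _ 1), (floor_eq _ 1); try reflexivity; simpl IZR; lra.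
Qed.
Lemma c3 : c_alpha 3 = 0%Z.
Proof.
  pose proof alpha_bounds. unfold c_alpha. simpl INR.
  rewrite (floor_eq _ 1), (floor_eq _ 1); try reflexivity; simpl IZR; lra.
Qed.

Lemma no11 k : c_alpha k <> 0%Z -> c_alpha (S k) = 0%Z.
Proof.
  intros H. pose proof alpha_bounds. unfold c_alpha in *. rewrite S_INR.
  set (x := INR k) in *. assert (0 <= x) by apply pos_INR.
  destruct (floor_le_bounds ((x+1)*alpha)) as [A1 A2].
  destruct (floor_le_bounds ((x+2)*alpha)) as [B1 B2].
  destruct (floor_le_bounds ((x+1+2)*alpha)) as [D1 D2].
  set (a := floorR ((x+1)*alpha)) in *.
  set (b := floorR ((x+2)*alpha)) in *.
  set (d := floorR ((x+1+2)*alpha)) in *.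
  replace (x + 1 + 1) with (x + 2) by ring. fold b.
  assert (E1 : (x+1+2)*alpha = (x+1)*alpha + 2*alpha) by ring.
  assert (E2 : (x+2)*alpha = (x+1)*alpha + alpha) by ring.
  assert (E3 : (x+1+2)*alpha = (x+2)*alpha + alpha) by ring.
  assert (Hab : IZR a < IZR (b + 1)) by (rewrite plus_IZR; lra).
  assert (Hbd : IZR b < IZR (d + 1)) by (rewrite plus_IZR; lra).
  assert (Hda : IZR d < IZR (a + 2)) by (rewrite plus_IZR; lra).
  apply lt_IZR in Hab. apply lt_IZR in Hbd. apply lt_IZR in Hda. lia.
Qed.

Close Scope R_scope.

Section W.
Variables s0 s1 : nat.
Definition sl k := S_letter s0 s1 (c_alpha k).
Fixpoint W (i L : nat) : nat :=
  match L with 0 => 0 | S L' => sl i + W (S i) L' end.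

Lemma W_add a : forall i b, W i (a + b) = W i a + W (i + a) b.
Proof.
  induction a; intros i b; simpl.
  - now rewrite Nat.add_0_r.
  - rewrite IHa. replace (S i + a) with (i + S a) by lia. lia.
Qed.

Lemma W_hom i L : S_hom s0 s1 (map c_alpha (seq i L)) = W i L.
Proof.
  revert i; induction L; intros i; simpl; auto.
Qed.

Lemma window i L n : (0 < L)%nat -> W i L = n ->
  exists w, in_LF w /\ S_hom s0 s1 w = n.
Proof.
  intros HL HW. exists (map c_alpha (seq i L)). split.
  - split.
    + destruct L; [lia|]. simpl. discriminate.
    + exists i. intros k Hk. rewrite length_map, length_seq in Hk.
      rewrite nth_indep with (d' := c_alpha 0) by (rewrite length_map, length_seq; auto).
      rewrite map_nth, seq_nth by auto. reflexivity.
  - now rewrite W_hom.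
Qed.

Lemma find_k n : forall N, W 0 N > n -> exists k, W 0 k <= n < W 0 (S k).
Proof.
  induction N; intros H; [simpl in H; lia|].
  destruct (le_lt_dec (W 0 N) n).
  - exists N. lia.
  - apply IHN. lia.
Qed.

Lemma W_ge L : forall i, (1 <= s0)%nat -> (1 <= s1)%nat -> W i L >= L.
Proof.
  induction L; intros i H0 H1; simpl; [lia|].
  specialize (IHL (S i) H0 H1). unfold sl, S_letter.
  destruct (Z.eqb _ _); lia.
Qed.
End W.

Lemma sl_z s0 s1 k : c_alpha k = 0%Z -> sl s0 s1 k = s0.
Proof. intros H. unfold sl, S_letter. now rewrite H. Qed.
Lemma sl_nz s0 s1 k : c_alpha k <> 0%Z -> sl s0 s1 k = s1.
Proof. intros H. unfold sl, S_letter. apply Z.eqb_neq in H. now rewrite H. Qed.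

Theorem lemma5 (s0 s1 : nat) (h0 : (1 <= s0)%nat) (h1 : (1 <= s1)%nat)
  (hS : (s0 = 1 /\ s1 <= 3)%nat \/ (s0 = 2 /\ s1 = 1)%nat) :
  forall n : nat, (exists w, in_LF w /\ S_hom s0 s1 w = n) <-> (1 <= n)%nat.
Proof.
  intros n. split.
  - intros [w [[Hne _] Hs]]. destruct w as [|a w]; [congruence|].
    simpl in Hs. unfold S_letter in Hs. destruct (Z.eqb a 0); lia.
  - intros Hn.
    assert (HN : W s0 s1 0 (S n) > n) by (pose proof (W_ge s0 s1 (S n) 0 h0 h1); lia).
    destruct (find_k s0 s1 n (S n) HN) as [k Hk].
    assert (E1 : W s0 s1 0 (S k) = W s0 s1 0 k + sl s0 s1 k)
      by (rewrite <- Nat.add_1_r, W_add; simpl; lia).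
    assert (Hw0 : W s0 s1 0 4 = sl s0 s1 0 + sl s0 s1 1 + sl s0 s1 2 + sl s0 s1 3)
      by (simpl; lia).
    assert (Hs0 := sl_z s0 s1 0 c0).
    assert (Hs1 := sl_nz s0 s1 1 ltac:(rewrite c1; discriminate)).
    assert (Hs2 := sl_z s0 s1 2 c2).
    assert (Hs3 := sl_z s0 s1 3 c3).
    assert (Wk3 : forall i, W s0 s1 i 3 = sl s0 s1 i + sl s0 s1 (S i) + sl s0 s1 (S (S i)))
      by (intros; simpl; lia).
    assert (WA := W_add s0 s1).
    destruct (Nat.eq_dec (W s0 s1 0 k) n) as [Heq|Hne].
    { destruct k as [|k]; [simpl in Heq; lia|]. apply (window _ _ 0 (S k)); lia. }
    set (m := W s0 s1 0 k) in *.
    destruct (Z.eq_dec (c_alpha k) 0) as [Hck|Hck].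
    +
      pose proof (sl_z s0 s1 k Hck) as Hsk.
      destruct hS as [[-> _]|[-> ->]]; [lia|].
      destruct (Z.eq_dec (c_alpha (S k)) 0) as [Hck1|Hck1].
      * pose proof (sl_z 2 1 (S k) Hck1).
        destruct k as [|k']; [rewrite c0 in *; rewrite c1 in Hck1; discriminate|].
        apply (window _ _ 2 (S k')). lia.
        pose proof (WA 2 0 (S k')). pose proof (WA (S k') 0 2). simpl (0+_) in *.
        simpl (W 2 1 (S k') 2) in *. simpl (W 2 1 0 2) in *.
        replace (S k' + 2) with (2 + S k') in * by lia.
        rewrite ?Nat.add_0_l in *. unfold m in *. lia.
      * pose proof (sl_nz 2 1 (S k) Hck1).
        apply (window _ _ 1 (S k)). lia.
        pose proof (WA 1 0 (S k)). pose proof (WA k 0 2).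
        simpl (W 2 1 0 1) in *. simpl (W 2 1 (0 + k) 2) in *.
        replace (k + 2) with (1 + S k) in * by lia. simpl (0 + k) in *.
        rewrite ?Nat.add_0_l in *. unfold m in *. lia.
    + pose proof (sl_nz s0 s1 k Hck) as Hsk.
      pose proof (no11 k Hck) as Hk1. pose proof (sl_z s0 s1 (S k) Hk1).
      destruct k as [|k']; [rewrite c0 in Hck; congruence|].
      assert (s0 = 1 /\ (s1 = 2 /\ n = m + 1 \/ s1 = 3 /\ (n = m + 1 \/ n = m + 2)))
        as [Hs0' Hcase] by lia.
      destruct (Nat.eq_dec n (m + s1 - 1)) as [Hn1|Hn1].
      * apply (window _ _ 1 (S k')). lia.
        pose proof (WA 1 0 (S k')). simpl (W s0 s1 0 1) in *.
        rewrite ?Nat.add_0_l in *. replace (1 + S k') with (S (S k')) in * by lia. unfold m in *. lia.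
      * assert (s1 = 3 /\ n = m + 1) as [-> ->] by lia.
        destruct (Z.eq_dec (c_alpha (S (S (S k')))) 0) as [Hc2|Hc2].
        -- pose proof (sl_z s0 3 _ Hc2).
           apply (window _ _ 2 (S (S k'))). lia.
           pose proof (WA 2 0 (S (S k'))). pose proof (WA (S k') 0 3).
           rewrite Wk3 in *. simpl (W s0 3 0 2) in *. simpl (0 + _) in *.
           replace (S k' + 3) with (2 + S (S k')) in * by lia.
           rewrite ?Nat.add_0_l in *. unfold m in *. lia.
        -- pose proof (sl_nz s0 3 _ Hc2).
           destruct k' as [|k'']; [rewrite c3 in Hc2; congruence|].
           apply (window _ _ 4 (S k'')). lia.
           pose proof (WA 4 0 (S k'')). pose proof (WA (S (S k'')) 0 3).
           rewrite Wk3 in *. simpl (0 + _) in *.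
           replace (S (S k'') + 3) with (4 + S k'') in * by lia.
           rewrite ?Nat.add_0_l in *. unfold m in *. lia.
Qed.
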